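(* Let $m\equiv 0\pmod 3$ be a positive integer and let $\mathcal Z$ be a three-class symmetric association scheme of order $3m^2$ with adjacency matrices $A_0=I,A_1,A_2,A_3$. Then the following are equivalent: (1) the character table (first eigenmatrix) of $\mathcal Z$ is $$P=\begin{bmatrix}1&m(m-1)&m(m+1)&(m-1)(m+1)\\1&m&0&-m-1\\1&0&-m&m-1\\1&-m&m&-1\end{bmatrix};$$ (2) $\mathcal Z$ is self-dual and $$A_1^3=m^2A_1+\tfrac13m^2(m-1)(m-2)J,\quad A_2^3=m^2A_2+\tfrac13m^2(m+1)(m+2)J,\quad (A_3+I)^3=m^2(A_3+I)+\tfrac13m^2(m-1)(m+1)J.$$
   Context: A three-class symmetric association scheme is a partition of $X\times X$ into relations $R_0=\{(x,x)\},R_1,R_2,R_3$ whose symmetric $0/1$ adjacency matrices satisfy $A_0=I$, $\sum A_i=J$ (all-ones matrix) and $A_iA_j=\sum_h p_{ij}^hA_h$ for constants $p_{ij}^h$. Its Bose–Mesner algebra (span of the $A_i$) has primitive idempotents $E_0=\frac1{|X|}J,E_1,E_2,E_3$; writing $A_j=\sum_i p_j(i)E_i$ and $E_i=\frac1{|X|}\sum_j q_i(j)A_j$, the first eigenmatrix (character table) is $P$ with $P_{ij}=p_j(i)$ and the second eigenmatrix is $Q$ with $Q_{ij}=q_j(i)$ (for a suitable ordering of the idempotents). The scheme is (formally) self-dual if $P=Q$. *)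

(* Defs.v *)
From HB Require Import structures.
From mathcomp Require Import all_boot all_order all_algebra all_field.
Set Implicit Arguments. Unset Strict Implicit. Unset Printing Implicit Defensive.
Import Order.TTheory GRing.Theory Num.Theory.
Local Open Scope ring_scope.

Definition i0 : 'I_4 := @Ordinal 4 0 erefl.
Definition i1 : 'I_4 := @Ordinal 4 1 erefl.
Definition i2 : 'I_4 := @Ordinal 4 2 erefl.
Definition i3 : 'I_4 := @Ordinal 4 3 erefl.

Definition Jmx (N : nat) : 'M[algC]_N := const_mx 1.

(* A 3-class scheme on X = 'I_N is given by the "colouring" R : X -> X -> 'I_4,
   i.e. (x,y) \in R_i iff R x y = i.  This makes {R_0,...,R_3} a partition of X*X. *)
Definition adj (N : nat) (R : 'I_N -> 'I_N -> 'I_4) (i : 'I_4) : 'M[algC]_N :=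
  \matrix_(x, y) ((R x y == i)%:R).

Definition sym_scheme3 (N : nat) (R : 'I_N -> 'I_N -> 'I_4) : Prop :=
  [/\ forall x y, (R x y == i0) = (x == y),
      forall x y, R x y = R y x,
      forall i, exists x y, R x y = i
    & exists p : 'I_4 -> 'I_4 -> 'I_4 -> algC,
        forall i j, adj R i *m adj R j = \sum_(h < 4) p i j h *: adj R h].

(* P and Q are the first and second eigenmatrices of the scheme w.r.t. some
   ordering E_0 = J/N, E_1, E_2, E_3 of its primitive idempotents:
   the E_i are nonzero pairwise orthogonal idempotents with
   A_j = sum_i P_ij E_i and E_i = (1/N) sum_j Q_ji A_j (so they lie in the
   Bose-Mesner algebra, and hence are exactly its primitive idempotents). *)
Definition eigenmatrices (N : nat) (R : 'I_N -> 'I_N -> 'I_4)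
    (P Q : 'M[algC]_4) : Prop :=
  exists E : 'I_4 -> 'M[algC]_N,
    [/\ E i0 = N%:R^-1 *: Jmx N,
        forall i j, E i *m E j = (if i == j then E i else 0),
        forall i, E i != 0,
        forall j, adj R j = \sum_(i < 4) P i j *: E i
      & forall i, E i = N%:R^-1 *: \sum_(j < 4) Q j i *: adj R j].

Definition has_char_table (N : nat) (R : 'I_N -> 'I_N -> 'I_4) (P : 'M[algC]_4) :=
  exists Q, eigenmatrices R P Q.

(* (Formally) self-dual: P = Q for a suitable ordering of the idempotents. *)
Definition self_dual (N : nat) (R : 'I_N -> 'I_N -> 'I_4) :=
  exists P, eigenmatrices R P P.

Definition Ptab (m : nat) : 'M[algC]_4 :=
  let x : algC := m%:R in
  \matrix_(i, j) nth 0 (nth [::]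
     [:: [:: 1; x * (x - 1); x * (x + 1); (x - 1) * (x + 1)];
         [:: 1; x; 0; - x - 1];
         [:: 1; 0; - x; x - 1];
         [:: 1; - x; x; -1]] i) j.

(* Main.v *)
Require Import Defs.
From HB Require Import structures.
From mathcomp Require Import all_boot all_order all_algebra all_field.
From mathcomp Require Import ring lra zify.
Import Order.TTheory GRing.Theory Num.Theory.
Local Open Scope ring_scope.
Set Implicit Arguments. Unset Strict Implicit. Unset Printing Implicit Defensive.

Definition S N (E : 'I_4 -> 'M[algC]_N) (c : 'I_4 -> algC) := \sum_(i < 4) c i *: E i.

Definition orthE N (E : 'I_4 -> 'M[algC]_N) :=
  forall i j, E i *m E j = (if i == j then E i else 0).

Lemma EmulS N (E : 'I_4 -> 'M[algC]_N) : orthE E -> forall k c, E k *m S E c = c k *: E k.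
Proof.
move=> horth k c.
rewrite /S mulmx_sumr (bigD1 k) //= -scalemxAr horth eqxx big1 ?addr0 // => i ik.
by rewrite -scalemxAr horth eq_sym (negbTE ik) scaler0.
Qed.

Lemma SmulS N (E : 'I_4 -> 'M[algC]_N) : orthE E -> forall c d,
  S E c *m S E d = S E (fun i => c i * d i).
Proof.
move=> horth c d; rewrite {1}/S mulmx_suml; apply: eq_bigr => i _.
by rewrite -scalemxAl EmulS // scalerA.
Qed.

Lemma SD N (E : 'I_4 -> 'M[algC]_N) c d : S E c + S E d = S E (fun i => c i + d i).
Proof. by rewrite /S -big_split; apply eq_bigr => i _; rewrite scalerDl. Qed.

Lemma SZ N (E : 'I_4 -> 'M[algC]_N) a c : a *: S E c = S E (fun i => a * c i).
Proof. by rewrite /S scaler_sumr; apply eq_bigr => i _; rewrite scalerA. Qed.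

Lemma S_ext N (E : 'I_4 -> 'M[algC]_N) c d : (forall i, c i = d i) -> S E c = S E d.
Proof. by move=> h; apply eq_bigr=> i _; rewrite h. Qed.

Lemma S_delta N (E : 'I_4 -> 'M[algC]_N) k : S E (fun i => (i == k)%:R) = E k.
Proof.
rewrite /S (bigD1 k) //= eqxx scale1r big1 ?addr0 // => i ik.
by rewrite (negbTE ik) scale0r.
Qed.

Lemma S_sum N (E : 'I_4 -> 'M[algC]_N) (a : 'I_4 -> algC) (c : 'I_4 -> 'I_4 -> algC) :
  \sum_j a j *: S E (c j) = S E (fun k => \sum_j a j * c j k).
Proof.
rewrite /S; under eq_bigr do rewrite scaler_sumr.
rewrite exchange_big /=; apply eq_bigr => k _; rewrite scaler_suml.
by apply eq_bigr => j _; rewrite scalerA.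
Qed.

Lemma scale_inj N (E : 'I_4 -> 'M[algC]_N) k (a b : algC) :
  E k != 0 -> a *: E k = b *: E k -> a = b.
Proof.
move=> nz /eqP; rewrite -subr_eq0 -scalerBl scaler_eq0 (negbTE nz) orbF subr_eq0.
by move/eqP.
Qed.

Lemma big4 (F : 'I_4 -> algC) : \sum_(i < 4) F i = F i0 + F i1 + F i2 + F i3.
Proof.
rewrite !big_ord_recl big_ord0 addr0 !addrA.
by congr (_ + _ + _ + _); congr F; apply: val_inj.
Qed.

Lemma Ptab_col0 m i : Ptab m i i0 = 1.
Proof. by case: i => [[|[|[|[|i]]]] hi] //; rewrite /Ptab mxE. Qed.

Lemma Ptab2 m k i : \sum_j Ptab m k j * Ptab m j i = (k == i)%:R * (3 * m ^ 2)%N%:R.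
Proof.
rewrite big4 /Ptab !mxE.
case: k => [[|[|[|[|k]]]] hk] //; case: i => [[|[|[|[|i]]]] hi] //=; ring.
Qed.

Lemma tri {a : int} : -1 <= a <= 1 -> [\/ a = -1, a = 0 | a = 1].
Proof. move=> /andP[h1 h2].
have : (a == -1) || (a == 0) || (a == 1) by lia.
by case/orP=> [/orP[]|] /eqP ->; [constructor 1|constructor 2|constructor 3].
Qed.

Lemma small_mul (m K c : int) : 3 <= m -> -2 <= c <= 2 -> m * K = c -> K = 0 /\ c = 0.
Proof.
move=> hm /andP[h1 h2] e.
have [hK|[hK|hK]] : 1 <= K \/ K = 0 \/ K <= -1 by lia.
- have : m * 1 <= m * K by rewrite ler_pM2l //; lia.
  lia.
- by rewrite hK mulr0 in e *; split.
- have : m * K <= m * (-1) by rewrite ler_pM2l //; lia.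
  lia.
Qed.

Lemma comb (m a1 a2 a3 b1 b2 b3 : int) : 3 <= m ->
  -1 <= a1 <= 1 -> -1 <= a2 <= 1 -> -1 <= a3 <= 1 ->
  -1 <= b1 <= 1 -> -1 <= b2 <= 1 -> -1 <= b3 <= 1 ->
  (m - 1) + m * (m - 1) * a1 + m * (m + 1) * a2 + (m * m - 1) * a3 = 0 ->
  (m + 1) + m * (m - 1) * b1 + m * (m + 1) * b2 + (m * m - 1) * b3 = 0 ->
  (m - 1) + m * (a1 * a1) + m * b1 * a2 + (m * (- a1 - b1) - 1) * a3 - 3 * m = 0 ->
  (a1 = 1 /\ a2 = 0 /\ a3 = -1) /\ (b1 = 0 /\ b2 = -1 /\ b3 = 1).
Proof.
move=> hm ha1 ha2 ha3 hb1 hb2 hb3 e1 e2 e3.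
have [k1 a3e] := @small_mul m (1 + (m - 1) * a1 + (m + 1) * a2 + m * a3) (1 + a3) hm
  ltac:(lia) ltac:(apply/eqP; rewrite -subr_eq0 -e1; apply/eqP; ring).
have [k2 b3e] := @small_mul m (1 + (m - 1) * b1 + (m + 1) * b2 + m * b3) (b3 - 1) hm
  ltac:(lia) ltac:(apply/eqP; rewrite -subr_eq0 -e2; apply/eqP; ring).
have ha3' : a3 = -1 by lia.
have hb3' : b3 = 1 by lia.
subst a3 b3; move: k1 k2 e3; clear e1 e2 a3e b3e.
case: (tri hb1) => ->; case: (tri hb2) => ->; case: (tri ha1) => ->; case: (tri ha2) => ->.
all: move=> k1 k2 e3.
all: try (by repeat split).
all: exfalso; lia.
Qed.

Lemma ord4_cases (i : 'I_4) : [\/ i = i0, i = i1, i = i2 | i = i3].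
Proof.
case: i => [[|[|[|[|i]]]] hi] //;
 [constructor 1|constructor 2|constructor 3|constructor 4]; exact: val_inj.
Qed.

Lemma dir1 (m : nat) (R : 'I_(3 * m ^ 2) -> 'I_(3 * m ^ 2) -> 'I_4) :
  (0 < m)%N -> sym_scheme3 R -> has_char_table R (Ptab m) ->
  [/\ self_dual R,
      adj R i1 *m adj R i1 *m adj R i1
        = (m%:R : algC) ^+ 2 *: adj R i1 + (3^-1 * (m%:R : algC) ^+ 2 * (m%:R - 1) * (m%:R - 2)) *: Jmx (3 * m ^ 2),
      adj R i2 *m adj R i2 *m adj R i2
        = (m%:R : algC) ^+ 2 *: adj R i2 + (3^-1 * (m%:R : algC) ^+ 2 * (m%:R + 1) * (m%:R + 2)) *: Jmx (3 * m ^ 2)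
    & (adj R i3 + 1%:M) *m (adj R i3 + 1%:M) *m (adj R i3 + 1%:M)
        = (m%:R : algC) ^+ 2 *: (adj R i3 + 1%:M) + (3^-1 * (m%:R : algC) ^+ 2 * (m%:R - 1) * (m%:R + 1)) *: Jmx (3 * m ^ 2)].
Proof.
move=> hm [hs0 hsym hne _] [Q [E [E0 horth nz hA hE]]].
have hN : ((3 * m ^ 2)%N%:R : algC) != 0.
  by rewrite pnatr_eq0 -lt0n muln_gt0 expn_gt0 hm.
have AS j : adj R j = S E (fun i => Ptab m i j) by rewrite hA.
have A0 : adj R i0 = 1%:M by apply/matrixP => a b; rewrite !mxE hs0.
have JS : Jmx (3 * m ^ 2) = S E (fun i => (3 * m ^ 2)%N%:R * (i == i0)%:R).
  by rewrite -SZ S_delta E0 scalerA mulfV // scale1r.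
have IS : 1%:M = S E (fun _ => 1) by rewrite -A0 AS; apply: S_ext => i; rewrite Ptab_col0.
split.
- exists (Ptab m), E; split=> // i.
  rewrite (eq_bigr (fun j => Ptab m j i *: S E (fun k => Ptab m k j))); last first.
    by move=> j _; rewrite AS.
  rewrite S_sum SZ -[LHS]S_delta; apply: S_ext => k.
  rewrite (eq_bigr (fun j => Ptab m k j * Ptab m j i)) ?Ptab2; last by move=> j _; rewrite mulrC.
  by rewrite mulrCA mulVf ?mulr1.
- rewrite AS JS !SmulS // SZ SZ SD; apply: S_ext => i.
  case: (ord4_cases i) => ->; rewrite /Ptab !mxE /=; by field.
- rewrite AS JS !SmulS // SZ SZ SD; apply: S_ext => i.
  case: (ord4_cases i) => ->; rewrite /Ptab !mxE /=; by field.
- rewrite AS IS JS SD !SmulS // SZ SZ SD; apply: S_ext => i.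
  case: (ord4_cases i) => ->; rewrite /Ptab !mxE /=; by field.
Qed.

Lemma root3 (q x : algC) : q ^+ 3 = x ^+ 2 * q ->
  exists a : int, -1 <= a <= 1 /\ q = x * a%:~R.
Proof.
move=> h.
have h2 : q * (q - x) * (q + x) = 0.
  have -> : q * (q - x) * (q + x) = q ^+ 3 - x ^+ 2 * q by ring.
  by rewrite h subrr.
move/eqP: h2; rewrite !mulf_eq0 subr_eq0 addr_eq0 => /orP[/orP[]|] /eqP ->.
- by exists 0; split=> //; ring.
- by exists 1; split=> //; ring.
- by exists (-1); split=> //; ring.
Qed.

Lemma xint2 (x a b : algC) (e : int) : x != 0 -> a = b -> x * e%:~R = a - b -> e = 0.
Proof.
move=> hx hab; rewrite hab subrr => /eqP; rewrite mulf_eq0 (negbTE hx) intr_eq0.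
by move/eqP.
Qed.

Lemma root_uniq (t k0 M : int) : 0 <= t -> 0 <= M -> M + 1 <= k0 ->
  t * t * t - M * M * t = k0 * k0 * k0 - M * M * k0 -> t = k0.
Proof.
move=> ht hM hk e.
have h : (t - k0) * (t * t + t * k0 + k0 * k0 - M * M) = 0.
  have -> : (t - k0) * (t * t + t * k0 + k0 * k0 - M * M) = (t * t * t - M * M * t) - (k0 * k0 * k0 - M * M * k0) by ring.
  by rewrite e subrr.
have pos : 0 < t * t + t * k0 + k0 * k0 - M * M by nia.
move/eqP: h; rewrite mulf_eq0 (negbTE (lt0r_neq0 pos)) orbF subr_eq0.
by move/eqP.
Qed.

Lemma row0 (m n : nat) (k0 : int) (c : algC) : (3 <= m)%N -> (m%:Z + 1 <= k0) ->
  c * (3 * m ^ 2)%N%:R = (k0 * k0 * k0 - m%:Z * m%:Z * k0)%:~R ->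
  (n%:R : algC) ^+ 3 = m%:R ^+ 2 * n%:R + c * (1 * (3 * m ^ 2)%N%:R) ->
  (n%:R : algC) = k0%:~R.
Proof.
move=> hm hk hc h.
have e : ((n%:Z * n * n - m%:Z * m * n)%:~R : algC) = (k0 * k0 * k0 - m%:Z * m%:Z * k0)%:~R.
  rewrite -hc; transitivity ((n%:R : algC) ^+ 3 - m%:R ^+ 2 * n%:R); first by ring.
  by rewrite h; ring.
have := @root_uniq (n%:Z) k0 (m%:Z) ltac:(lia) ltac:(lia) hk (intr_inj e).
move=> <-; ring.
Qed.

Lemma dir2 (m : nat) (R : 'I_(3 * m ^ 2) -> 'I_(3 * m ^ 2) -> 'I_4) :
  (0 < m)%N -> (3 %| m)%N -> sym_scheme3 R ->
  [/\ self_dual R,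
      adj R i1 *m adj R i1 *m adj R i1
        = (m%:R : algC) ^+ 2 *: adj R i1 + (3^-1 * (m%:R : algC) ^+ 2 * (m%:R - 1) * (m%:R - 2)) *: Jmx (3 * m ^ 2),
      adj R i2 *m adj R i2 *m adj R i2
        = (m%:R : algC) ^+ 2 *: adj R i2 + (3^-1 * (m%:R : algC) ^+ 2 * (m%:R + 1) * (m%:R + 2)) *: Jmx (3 * m ^ 2)
    & (adj R i3 + 1%:M) *m (adj R i3 + 1%:M) *m (adj R i3 + 1%:M)
        = (m%:R : algC) ^+ 2 *: (adj R i3 + 1%:M) + (3^-1 * (m%:R : algC) ^+ 2 * (m%:R - 1) * (m%:R + 1)) *: Jmx (3 * m ^ 2)]
  -> has_char_table R (Ptab m).
Proof.
move=> hm h3 [hs0 _ _ _] [[P [E [E0 horth nz hA hE]]] c1 c2 c3].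
have hm3 : (3 <= m)%N by apply: dvdn_leq.
have hN : ((3 * m ^ 2)%N%:R : algC) != 0.
  by rewrite pnatr_eq0 -lt0n muln_gt0 expn_gt0 hm.
have hx : (m%:R : algC) != 0 by rewrite pnatr_eq0 -lt0n.
have AS j : adj R j = S E (fun i => P i j) by rewrite hA.
have A0 : adj R i0 = 1%:M by apply/matrixP => a b; rewrite !mxE hs0.
have EA k j : E k *m adj R j = P k j *: E k by rewrite AS EmulS.
have pk0 k : P k i0 = 1.
  by apply/esym/(scale_inj (nz k)); rewrite -EA A0 mulmx1 scale1r.
have JS : Jmx (3 * m ^ 2) = (3 * m ^ 2)%N%:R *: E i0.
  by rewrite E0 scalerA mulfV // scale1r.
have EJ k : E k *m Jmx (3 * m ^ 2) = ((k == i0)%:R * (3 * m ^ 2)%N%:R) *: E k.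
  rewrite JS -scalemxAr horth; case: eqP => [->|_] /=.
    by rewrite mul1r.
  by rewrite mul0r scale0r scaler0.
have P2 k j : \sum_i P k i * P i j = (k == j)%:R * (3 * m ^ 2)%N%:R.
  have h : E k *m E j = ((3 * m ^ 2)%N%:R^-1 * \sum_i P k i * P i j) *: E k.
    rewrite [X in _ *m X]hE -scalemxAr mulmx_sumr -scalerA scaler_suml; congr (_ *: _).
    by apply: eq_bigr => i _; rewrite -scalemxAr EA scalerA mulrC.
  have : (k == j)%:R *: E k = ((3 * m ^ 2)%N%:R^-1 * \sum_i P k i * P i j) *: E k.
    by rewrite -h horth; case: eqP => _; rewrite ?scale1r ?scale0r.
  move/(scale_inj (nz k)) => e.
  by apply: (mulfI (invr_neq0 hN)); rewrite -e mulrCA mulVf ?mulr1.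
have cub (A' : 'M[algC]_(3 * m ^ 2)) (q c : algC) k : E k *m A' = q *: E k ->
    A' *m A' *m A' = (m%:R : algC) ^+ 2 *: A' + c *: Jmx (3 * m ^ 2) ->
    q ^+ 3 = m%:R ^+ 2 * q + c * ((k == i0)%:R * (3 * m ^ 2)%N%:R).
  move=> hq hc; apply: (scale_inj (nz k)).
  have := congr1 (mulmx (E k)) hc.
  rewrite !mulmxA hq -scalemxAl hq scalerA -scalemxAl hq scalerA.
  rewrite mulmxDr -!scalemxAr hq EJ !scalerA => h.
  by rewrite scalerDl -h; congr (_ *: _); ring.
have col k (hk : k != i0) (A' : 'M[algC]_(3 * m ^ 2)) q c : E k *m A' = q *: E k ->
    A' *m A' *m A' = (m%:R : algC) ^+ 2 *: A' + c *: Jmx (3 * m ^ 2) ->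
    exists a : int, -1 <= a <= 1 /\ q = m%:R * a%:~R.
  move=> hq hc; apply: root3; rewrite (cub _ _ _ _ hq hc) (negbTE hk) mul0r mulr0 addr0.
  done.
have EB k : E k *m (adj R i3 + 1%:M) = (P k i3 + 1) *: E k.
  by rewrite mulmxDr EA mulmx1 scalerDl scale1r.
have [a1 [ha1 pa1]] := col i1 isT _ _ _ (EA i1 i1) c1.
have [a2 [ha2 pa2]] := col i2 isT _ _ _ (EA i2 i1) c1.
have [a3 [ha3 pa3]] := col i3 isT _ _ _ (EA i3 i1) c1.
have [b1 [hb1 pb1]] := col i1 isT _ _ _ (EA i1 i2) c2.
have [b2 [hb2 pb2]] := col i2 isT _ _ _ (EA i2 i2) c2.
have [b3 [hb3 pb3]] := col i3 isT _ _ _ (EA i3 i2) c2.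
have [g1 [hg1 pg1]] := col i1 isT _ _ _ (EB i1) c3.
have [g2 [hg2 pg2]] := col i2 isT _ _ _ (EB i2) c3.
have [g3 [hg3 pg3]] := col i3 isT _ _ _ (EB i3) c3.
have {}pg1 : P i1 i3 = m%:R * g1%:~R - 1 by rewrite -pg1 addrK.
have {}pg2 : P i2 i3 = m%:R * g2%:~R - 1 by rewrite -pg2 addrK.
have {}pg3 : P i3 i3 = m%:R * g3%:~R - 1 by rewrite -pg3 addrK.
have val j : exists n : nat, P i0 j = n%:R.
  have y : 'I_(3 * m ^ 2) by exists 0%N; rewrite muln_gt0 expn_gt0 hm.
  have := congr1 (fun M : 'M[algC]_(3 * m ^ 2) => M y y) (EA i0 j).
  rewrite E0 -scalemxAl !mxE /=.
  under eq_bigr do rewrite !mxE mul1r.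
  rewrite -natr_sum => h.
  exists (\sum_z (R z y == j) : nat)%N.
  by apply: (mulfI (invr_neq0 hN)); rewrite h; ring.
have [n1 hn1] := val i1.
have [n2 hn2] := val i2.
have [n3 hn3] := val i3.
have p01 : P i0 i1 = (m%:Z * (m%:Z - 1))%:~R.
  rewrite hn1; apply: (@row0 m n1 _ (3^-1 * (m%:R : algC) ^+ 2 * (m%:R - 1) * (m%:R - 2))) => //.
  - by nia.
  - by field.
  - by have := cub _ _ _ _ (EA i0 i1) c1; rewrite eqxx -hn1.
have p02 : P i0 i2 = (m%:Z * (m%:Z + 1))%:~R.
  rewrite hn2; apply: (@row0 m n2 _ (3^-1 * (m%:R : algC) ^+ 2 * (m%:R + 1) * (m%:R + 2))) => //.
  - by nia.
  - by field.
  - by have := cub _ _ _ _ (EA i0 i2) c2; rewrite eqxx -hn2.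
have p03 : P i0 i3 = (m%:Z * m%:Z)%:~R - 1.
  suff h : P i0 i3 + 1 = (m%:Z * m%:Z)%:~R by rewrite -h addrK.
  rewrite hn3 natr1.
  apply: (@row0 m n3.+1 _ (3^-1 * (m%:R : algC) ^+ 2 * (m%:R - 1) * (m%:R + 1))) => //.
  - by nia.
  - by field.
  - by have := cub _ _ _ _ (EB i0) c3; rewrite eqxx hn3 -(natr1 n3).
have rs k (hk : k != i0) : P k i0 + P k i1 + P k i2 + P k i3 = 0.
  by have := P2 k i0; rewrite big4 !pk0 !mulr1 (negbTE hk) mul0r.
have r1 : a1 + b1 + g1 = 0.
  by apply: (xint2 hx (rs i1 isT)); rewrite pk0 pa1 pb1 pg1; ring.
have r2 : a2 + b2 + g2 = 0.
  by apply: (xint2 hx (rs i2 isT)); rewrite pk0 pa2 pb2 pg2; ring.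
have r3 : a3 + b3 + g3 = 0.
  by apply: (xint2 hx (rs i3 isT)); rewrite pk0 pa3 pb3 pg3; ring.
have e1 : (m%:Z - 1) + m%:Z * (m%:Z - 1) * a1 + m%:Z * (m%:Z + 1) * a2 + (m%:Z * m%:Z - 1) * a3 = 0.
  have := P2 i0 i1; rewrite big4 (_ : (i0 == i1) = false) // mul0r.
  rewrite !pk0 p01 p02 p03 pa1 pa2 pa3 => h.
  by apply: (xint2 hx h); ring.
have e2 : (m%:Z + 1) + m%:Z * (m%:Z - 1) * b1 + m%:Z * (m%:Z + 1) * b2 + (m%:Z * m%:Z - 1) * b3 = 0.
  have := P2 i0 i2; rewrite big4 (_ : (i0 == i2) = false) // mul0r.
  rewrite !pk0 p01 p02 p03 pb1 pb2 pb3 => h.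
  by apply: (xint2 hx h); ring.
have eg1 : g1 = - a1 - b1 by lia.
subst g1.
have e3 : (m%:Z - 1) + m%:Z * (a1 * a1) + m%:Z * b1 * a2 + (m%:Z * (- a1 - b1) - 1) * a3 - 3 * m%:Z = 0.
  have := P2 i1 i1; rewrite big4 eqxx mul1r.
  rewrite !pk0 p01 pa1 pb1 pg1 pa2 pa3 => h.
  by apply: (xint2 hx h); ring.
have [[ea1 [ea2 ea3]] [eb1 [eb2 eb3]]] :=
  comb (m := m%:Z) ltac:(lia) ha1 ha2 ha3 hb1 hb2 hb3 e1 e2 e3.
subst a1 a2 a3 b1 b2 b3.
have eg2 : g2 = 1 by lia.
have eg3 : g3 = 0 by lia.
subst g2 g3.
have PP : P = Ptab m.
  apply/matrixP => i j; case: (ord4_cases i) => ->; case: (ord4_cases j) => ->;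
  rewrite /Ptab !mxE /= ?pk0 ?p01 ?p02 ?p03 ?pa1 ?pa2 ?pa3 ?pb1 ?pb2 ?pb3 ?pg1 ?pg2 ?pg3;
  ring.
by exists P, E; rewrite -PP; split.
Qed.

Theorem lemma5p1 (m : nat) (R : 'I_(3 * m ^ 2) -> 'I_(3 * m ^ 2) -> 'I_4) :
  (0 < m)%N -> (3 %| m)%N -> sym_scheme3 R ->
  let N := (3 * m ^ 2)%N in
  let x : algC := m%:R in
  let A := adj R in
  let J := Jmx N in
  has_char_table R (Ptab m) <->
  [/\ self_dual R,
      A i1 *m A i1 *m A i1
        = x ^+ 2 *: A i1 + (3^-1 * x ^+ 2 * (x - 1) * (x - 2)) *: J,
      A i2 *m A i2 *m A i2
        = x ^+ 2 *: A i2 + (3^-1 * x ^+ 2 * (x + 1) * (x + 2)) *: J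
    & (A i3 + 1%:M) *m (A i3 + 1%:M) *m (A i3 + 1%:M)
        = x ^+ 2 *: (A i3 + 1%:M) + (3^-1 * x ^+ 2 * (x - 1) * (x + 1)) *: J].
Proof.
move=> hm h3 hs N x A J; split=> H.
- exact: (dir1 hm hs H).
- exact: (dir2 hm h3 hs H).
Qed.
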